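(* Let $H$ be a real vector space of dimension $d+1$ with $d\ge1$, and $q$ a quadratic form on $H$ of signature $(1,d)$. Let $A\subset H$ be a discrete subset such that for some constant $M>0$ we have $q(x)\ge -M$ for all $x\in A$, and suppose there is a proper subspace $H_0\subsetneq H$ with $A\subset H_0$. Let $u\in H\setminus H_0$ with $q(u)=0$. Then there is an open neighbourhood $U$ of $u$ in $H$ such that $U\cap x^\perp\ne\emptyset$ for only finitely many $x\in A$.
   Context: $x^\perp$ denotes the $q$-orthogonal complement of $x$ in $H$. *)

(* Defs.v *)
From HB Require Import structures.
From mathcomp Require Import all_boot all_order all_algebra.
From mathcomp Require Import all_classical all_reals all_analysis.
Set Implicit Arguments. Unset Strict Implicit. Unset Printing Implicit Defensive.
Import Order.TTheory GRing.Theory Num.Theory.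
Import numFieldNormedType.Exports.
Local Open Scope classical_set_scope.
Local Open Scope ring_scope.

(* H = R^(n) realised as row vectors 'rV[R]_n.  A quadratic form on H is
   given by a symmetric matrix Q: q(x) = x Q x^T; its polar bilinear form is
   b(x,y) = x Q y^T. *)
Definition bil (R : realType) (n : nat) (Q : 'M[R]_n) (x y : 'rV[R]_n) : R :=
  (x *m Q *m y^T) 0 0.

Definition qf (R : realType) (n : nat) (Q : 'M[R]_n) (x : 'rV[R]_n) : R :=
  bil Q x x.

Definition qperp (R : realType) (n : nat) (Q : 'M[R]_n) (x : 'rV[R]_n)
  : set 'rV[R]_n := [set y | bil Q x y = 0].

(* signature (1,d) on R^(d+1): by Sylvester, there is a basis (rows of an
   invertible P) in which q = x_0^2 - x_1^2 - ... - x_d^2. *)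
Definition signature_1_d (R : realType) (d : nat) (Q : 'M[R]_(d.+1)) : Prop :=
  Q^T = Q /\
  exists P : 'M[R]_(d.+1), P \in unitmx /\
    P *m Q *m P^T = \matrix_(i, j) (if i == j then (if i == ord0 then 1 else -1) else 0).

(* discrete subset of H: locally finite (no accumulation point in H) *)
Definition discrete_subset (R : realType) (n : nat) (A : set 'rV[R]_n) : Prop :=
  forall p : 'rV[R]_n, exists V, nbhs p V /\ finite_set (A `&` V).

(* Main.v *)
Require Import Defs.
From HB Require Import structures.
From mathcomp Require Import all_boot all_order all_algebra.
From mathcomp Require Import all_classical all_reals all_analysis.
From mathcomp Require Import finmap ring lra.
Import Order.TTheory GRing.Theory Num.Theory.
Import numFieldNormedType.Exports.
Local Open Scope classical_set_scope.
Local Open Scope ring_scope.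
Section Aux.
Variable R : realType.

Lemma entry_le m n (x : 'M[R]_(m,n)) i j : `|x i j| <= `|x|.
Proof.
have /mapP[k Hk ->] : `|x i j| \in [seq `|x y.1 y.2| | y : 'I_m * 'I_n].
  by apply/mapP; exists (i, j) => //=; rewrite mem_enum.
by rewrite [leRHS]/Num.Def.normr /= mx_normrE; apply/bigmax_geP; right => /=; exists k.
Qed.

Lemma norm_le_entries m n (x : 'M[R]_(m,n)) r : 0 <= r ->
  (forall i j, `|x i j| <= r) -> `|x| <= r.
Proof.
move=> r0 H; rewrite [leLHS]/Num.Def.normr /= mx_normrE.
by apply: bigmax_le => // -[i j] _; exact: H.
Qed.

Lemma mulmx_bound m n (B : 'M[R]_(m,n)) :
  exists K, 0 < K /\ forall x : 'rV[R]_m, `|x *m B| <= K * `|x|.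
Proof.
exists (m%:R * `|B| + 1); split; first by rewrite ltr_wpDl ?mulr_ge0.
move=> x; apply: norm_le_entries; first by rewrite mulr_ge0 // ltW // ltr_wpDl ?mulr_ge0.
move=> i j; rewrite mxE.
apply: le_trans (ler_norm_sum _ _ _) _.
apply: le_trans (_ : \sum_(k < m) `|x| * `|B| <= _).
  apply: ler_sum => k _; rewrite normrM; apply: ler_pM => //; exact: entry_le.
rewrite sumr_const card_ord -[_ *+ m]mulr_natl.
have := normr_ge0 x; have := normr_ge0 B; have : (0:R) <= m%:R by [].
nra.
Qed.

Lemma dot_bound n (x y : 'rV[R]_n) : `|(x *m y^T) 0 0| <= n%:R * (`|x| * `|y|).
Proof.
rewrite mxE; apply: le_trans (ler_norm_sum _ _ _) _.
apply: le_trans (_ : \sum_(k < n) `|x| * `|y| <= _).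
  apply: ler_sum => k _; rewrite normrM mxE; apply: ler_pM => //; exact: entry_le.
by rewrite sumr_const card_ord -[_ *+ n]mulr_natl.
Qed.

Lemma bil_bound n (Q : 'M[R]_n) : exists K, 0 < K /\
  forall x y, `|bil Q x y| <= K * (`|x| * `|y|).
Proof.
have [K [K0 HK]] := mulmx_bound _ _ Q.
exists (n%:R * K + 1); split; first by rewrite ltr_wpDl ?mulr_ge0 // ltW.
move=> x y; rewrite /bil; apply: le_trans (dot_bound _ _ _) _.
have h1 : `|x *m Q| * `|y| <= K * `|x| * `|y| by rewrite ler_wpM2r.
have := normr_ge0 x; have := normr_ge0 y; have : (0:R) <= n%:R by [].
have : 0 <= n%:R * (K * `|x| * `|y| - `|x *m Q| * `|y|) by rewrite mulr_ge0 // subr_ge0.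
nra.
Qed.

Definition sgn n (k : 'I_n.+1) : R := if k == ord0 then 1 else -1.
Arguments sgn {n}.

Lemma bil_coord n (Q P : 'M[R]_n.+1) : P \in unitmx ->
  P *m Q *m P^T = \matrix_(i, j) (if i == j then (if i == ord0 then 1 else -1) else 0) ->
  forall x y, bil Q x y =
    \sum_(k < n.+1) sgn k * ((x *m invmx P) 0 k * (y *m invmx P) 0 k).
Proof.
move=> Pu HP x y.
have ex : x = (x *m invmx P) *m P by rewrite mulmxKV.
have ey : y = (y *m invmx P) *m P by rewrite mulmxKV.
set cx := x *m invmx P; set cy := y *m invmx P.
rewrite /bil ex ey trmx_mul !mulmxA.
have -> : cx *m P *m Q *m P^T = cx *m (P *m Q *m P^T) by rewrite !mulmxA.
rewrite HP.
have -> : (\matrix_(i, j) (if i == j then (if i == ord0 then 1 else -1) else 0) : 'M[R]_n.+1)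
   = diag_mx (\row_k sgn k).
  apply/matrixP => i j; rewrite !mxE /sgn; case: eqP => [->|]; by rewrite ?eqxx ?mulr1n ?mulr0n.
rewrite mul_mx_diag mxE; apply: eq_bigr => k _; rewrite !mxE; ring.
Qed.

Lemma compact_locfin n (A K : set 'rV[R]_n) :
  compact K -> discrete_subset A -> finite_set (A `&` K).
Proof.
move=> cK hA; have [V HV] := choice hA.
move: cK; rewrite compact_cover => cK.
have [|D' sD cov] := cK _ K (fun p => interior (V p)) (fun p _ => @open_interior _ _).
  by move=> x Kx; exists x => //; exact: (HV x).1.
have sub : A `&` K `<=` cover [set` D'] (fun i => A `&` V i).
  move=> x [Ax /cov [i Di ix]]; exists i => //; split => //.
  exact: interior_subset.
apply: (sub_finite_set sub).
apply: bigcup_finite; first exact: finite_fset.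
by move=> i _; exact: (HV i).2.
Qed.

Lemma finite_bounded n (A : set 'rV[R]_n) (C : R) :
  discrete_subset A -> finite_set (A `&` [set x | `|x| <= C]).
Proof.
move=> hA.
have [C0|C0] := leP C 0.
  apply: (@sub_finite_set _ _ (A `&` closed_ball 0 1)); last first.
    apply: compact_locfin hA; apply: bounded_closed_compact; last exact: closed_ball_closed.
    exists 1; split => // N hN x /=; rewrite closed_ballE // /closed_ball_ /= sub0r normrN => h.
    by apply: le_trans h (ltW _).
  move=> x [Ax hx]; split => //; rewrite closed_ballE // /closed_ball_ /= sub0r normrN.
  by apply: le_trans hx _; apply: le_trans C0 _.
apply: (@sub_finite_set _ _ (A `&` closed_ball 0 C)); last first.
  apply: compact_locfin hA; apply: bounded_closed_compact; last exact: closed_ball_closed.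
  exists C; split; first by rewrite realE ltW.
  move=> N hN x /=; rewrite closed_ballE // /closed_ball_ /= sub0r normrN => h.
  by apply: le_trans h (ltW _).
move=> x [Ax hx]; split => //; rewrite closed_ballE // /closed_ball_ /= sub0r normrN.
exact: hx.
Qed.
End Aux.
Arguments sgn {R n}.

Theorem corollary5p15 (R : realType) (d : nat) (hd : (1 <= d)%N)
  (Q : 'M[R]_(d.+1)) (hQ : signature_1_d Q)
  (A : set 'rV[R]_(d.+1)) (hA : discrete_subset A)
  (M : R) (hM : 0 < M) (hqA : forall x, A x -> - M <= qf Q x)
  (H0 : {vspace 'rV[R]_(d.+1)}) (hH0 : H0 != fullv)
  (hAH0 : forall x, A x -> x \in H0)
  (u : 'rV[R]_(d.+1)) (hu : u \notin H0) (hqu : qf Q u = 0) :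
  exists U : set 'rV[R]_(d.+1),
    open U /\ U u /\ finite_set [set x | A x /\ U `&` qperp Q x !=set0].
Proof.
move: hQ => [_ [P [Pu HP]]].
pose c (x : 'rV[R]_d.+1) := x *m invmx P.
have bc : forall x y, bil Q x y = \sum_(k < d.+1) sgn k * (c x 0 k * c y 0 k)
  := @bil_coord R d Q P Pu HP.
pose E x := \sum_(k < d.+1) (c x 0 k) ^+ 2.
pose l x := c x 0 ord0.
have cB : forall x y a, c (x - a *: y) = c x - a *: c y.
  by move=> x y a; rewrite /c mulmxBl scalemxAl.
have E0 : forall z, 0 <= E z by move=> z; apply: sumr_ge0 => k _; exact: sqr_ge0.
have qE : forall z, l z = 0 -> qf Q z = - E z.
  move=> z lz; have lz' : c z 0 ord0 = 0 := lz.
  rewrite /qf bc /E -sumrN; apply: eq_bigr => k _.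
  rewrite /sgn; case: eqP => [->|_]; first by rewrite lz'; ring.
  ring.
have cK : forall z, c z *m P = z by move=> z; rewrite /c mulmxKV.
have lu0 : l u != 0.
  apply/negP => /eqP lu; move: hu; have := qE u lu; rewrite hqu => /eqP.
  rewrite eq_sym oppr_eq0 psumr_eq0 /=; last by move=> k _; exact: sqr_ge0.
  move=> /allP h; suff -> : u = 0 by rewrite mem0v.
  rewrite -(cK u); suff -> : c u = 0 by rewrite mul0mx.
  apply/matrixP => i j; rewrite (ord1 i) [X in _ = X]mxE; apply/eqP; rewrite -sqrf_eq0.
  by apply: h; rewrite mem_index_enum.
pose pi := daddv_pi <[u]>%VS H0.
have capU : (<[u]> :&: H0 = 0)%VS.
  apply/eqP; rewrite -subv0; apply/subvP => x /memv_capP [/vlineP [k ->] hx].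
  rewrite memv0; have [->|k0] := eqVneq k 0; first by rewrite scale0r.
  by move: hu; have := memvZ k^-1 hx; rewrite scalerA mulVf // scale1r => ->.
have capU' : (H0 :&: <[u]> = 0)%VS by rewrite capvC.
pose Mp := lin1_mx pi.
have Mpx : forall w, w *m Mp = pi w := mul_rV_lin1 _.
have pi0 : forall x, x \in H0 -> pi x = 0.
  move=> x xH; have := @daddv_pi_add _ _ H0 <[u]>%VS x capU' (subvP (addvSl H0 <[u]>%VS) x xH).
  rewrite daddv_pi_id // => /(canRL (addKr x)); by rewrite addNr.
have piu : pi u = u by rewrite daddv_pi_id // memv_line.
have [Kb [Kb0 HKb]] := @bil_bound R _ Q.
have [Kc [Kc0 HKc]] := @mulmx_bound R _ _ (invmx P).
have [KP [KP0 HKP]] := @mulmx_bound R _ _ P.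
have [Kp [Kp0 HKp]] := @mulmx_bound R _ _ Mp.
have lbound : forall x, `|l x| <= Kc * `|x|.
  by move=> x; apply: le_trans (HKc x); exact: entry_le.
have Ebound : forall z, `|z| ^+ 2 <= KP ^+ 2 * E z.
  move=> z; have h1 : `|c z| <= Num.sqrt (E z).
    apply: norm_le_entries; first exact: sqrtr_ge0.
    move=> i j; rewrite (ord1 i) -sqrtr_sqr ler_sqrt //.
    rewrite /E (bigD1 j) //= lerDl; apply: sumr_ge0 => k _; exact: sqr_ge0.
  have h2 : `|z| <= KP * Num.sqrt (E z).
    rewrite -{1}(cK z); apply: le_trans (HKP _) _; by rewrite ler_pM2l.
  have s2 := sqr_sqrtr (E0 z).
  rewrite -s2 -exprMn expr2 [X in _ <= X]expr2.
  by apply: ler_pM => //.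
have Hbound : forall x a, x \in H0 -> `|x| <= (1 + Kp) * `|x - a *: u|.
  move=> x a xH.
  have hw : (x - a *: u) *m Mp = - (a *: u).
    by rewrite Mpx linearB linearZ /= pi0 // piu sub0r.
  have h : `|a| * `|u| <= Kp * `|x - a *: u|.
    by have := HKp (x - a *: u); rewrite hw normrN normrZ.
  have ex : x = (x - a *: u) + a *: u by rewrite subrK.
  have h3 : `|x| <= `|x - a *: u| + `|a| * `|u|.
    by rewrite {1}ex -normrZ; exact: ler_normD.
  lra.
have cBk : forall x y a k, c (x - a *: y) 0 k = c x 0 k - a * c y 0 k.
  by move=> x y a k; rewrite cB; move: (c x) (c y) => X Y; rewrite !mxE.
have cBk' : forall x y k, c (x - y) 0 k = c x 0 k - c y 0 k.
  by move=> x y k; rewrite /c mulmxBl; move: (x *m _) (y *m _) => X Y; rewrite !mxE.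
pose beta := `|l u|.
have beta0 : 0 < beta by rewrite normr_gt0.
pose L := (1 + Kp) ^+ 2 * KP ^+ 2.
have L0 : 0 < L by apply: mulr_gt0; apply: exprn_gt0; lra.
pose eps := beta / (4 * L * Kc * Kb).
have eps0 : 0 < eps.
  have h : 0 < 4 * L * Kc * Kb by apply: mulr_gt0 => //; apply: mulr_gt0 => //; apply: mulr_gt0.
  exact: divr_gt0.
exists (ball u eps); split; first exact: ball_open.
split; first exact: ballxx.
apply: (sub_finite_set _ (@finite_bounded R _ A (2 * L * M + 1) hA)).
move=> x [Ax [y [Uy bxy]]]; split => //=.
have uy : `|u - y| < eps by rewrite -ball_normE in Uy.
have xH := hAH0 x Ax.
pose a := l x / l u.
have cw : forall k, c (x - a *: u) 0 k = c x 0 k - a * c u 0 k by move=> k; rewrite cBk.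
have lw : l (x - a *: u) = 0.
  rewrite /l cw -/(l x) -/(l u) /a; field; exact: lu0.
have expw : qf Q (x - a *: u) = qf Q x - 2 * a * bil Q x u + a ^+ 2 * qf Q u.
  rewrite /qf !bc !mulr_sumr -sumrB -big_split /=; apply: eq_bigr => k _.
  rewrite cw; ring.
have Ew : E (x - a *: u) = - qf Q x + 2 * a * bil Q x u.
  have := qE _ lw; rewrite expw hqu => h; rewrite -[LHS]opprK -h; ring.
have bsplit : bil Q x u = bil Q x (u - y) + bil Q x y.
  rewrite !bc -big_split /=; apply: eq_bigr => k _; rewrite cBk'; ring.
have bxy' : bil Q x y = 0 := bxy.
have bxu : `|bil Q x u| <= Kb * (`|x| * eps).
  rewrite bsplit bxy' addr0; apply: le_trans (HKb _ _) _.
  by rewrite ler_pM2l //; apply: ler_wpM2l => //; exact: ltW.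
have la : `|a| <= Kc * `|x| / beta.
  rewrite /a normrM normfV ler_pdivlMr // -/beta mulfVK; last by rewrite gt_eqF.
  exact: lbound.
pose X := `|x|.
have X0 : 0 <= X by exact: normr_ge0.
have h4 : `|a| * `|bil Q x u| <= (Kc * X / beta) * (Kb * (X * eps)).
  by apply: ler_pM.
have h5 : (Kc * X / beta) * (Kb * (X * eps)) = X ^+ 2 / (4 * L).
  rewrite /eps; field; apply/and4P; split; by rewrite gt_eqF.
have h6 : 2 * a * bil Q x u <= 2 * (`|a| * `|bil Q x u|).
  rewrite -mulrA ler_pM2l // -normrM; exact: ler_norm.
have h7 : E (x - a *: u) <= M + X ^+ 2 / (2 * L).
  rewrite Ew; have := hqA x Ax.
  have : 2 * (X ^+ 2 / (4 * L)) = X ^+ 2 / (2 * L) by field; rewrite gt_eqF.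
  lra.
have h8 : X ^+ 2 <= L * E (x - a *: u).
  have hb := Hbound x a xH; have he := Ebound (x - a *: u).
  apply: le_trans (_ : (1 + Kp) ^+ 2 * `|x - a *: u| ^+ 2 <= _).
    rewrite -exprMn !expr2; apply: ler_pM => //.
  by rewrite /L -mulrA ler_pM2l // exprn_gt0 // ltr_wpDr // ltW.
have h9 : L * (X ^+ 2 / (2 * L)) = X ^+ 2 / 2 by field; rewrite gt_eqF.
have h10 : X ^+ 2 <= 2 * L * M.
  have : L * E (x - a *: u) <= L * (M + X ^+ 2 / (2 * L)) by rewrite ler_pM2l.
  rewrite mulrDr h9; lra.
have hLM : 0 <= 2 * L * M by apply: mulr_ge0; [apply: mulr_ge0|]; lra.
rewrite -/X.
nra.
Qed.
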